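(* Let $\Sigma$ be an alphabet of size $d\ge 2$, let $\delta\in[0,1/d)$, and let $N$ be a $\delta$-upper bounded noise matrix on $\Sigma$. Let $\delta'=f(\delta)$. There exists a stochastic matrix $P=P(N,\delta)$ such that, for any protocol $\mathcal{A}$, the simulation of $\mathcal{A}$ with artificial noise $P$ under noise $N$ has the same distribution as $\mathcal{A}$ run under the $\delta'$-uniform noise matrix. In particular, for every displayed message $i\in\Sigma$, the message obtained by applying $N$ and then $P$ equals $j$ with probability $T_{i,j}$, where $T$ is the $\delta'$-uniform matrix.
   Context: A $d\times d$ matrix is stochastic if its entries are non-negative and each row sums to $1$. For $\delta\in[0,1/d]$, a stochastic matrix $N$ indexed by $\Sigma$ is: - $\delta$-upper bounded if $N_{\sigma,\sigma}\ge1-(d-1)\delta$ for all $\sigma$ and $N_{\sigma,\sigma'}\le\delta$ for all $\sigma\ne\sigma'$; - $\delta$-uniform if $N_{\sigma,\sigma}=1-(d-1)\delta$ and $N_{\sigma,\sigma'}=\delta$ for all $\sigma\ne\sigma'$. Noise matrices act on messages: when a message $\sigma$ is observed through noise $N$, the observer receives $\sigma'$ with probability $N_{\sigma,\sigma'}$, independently across observations. Simulation of a protocol $\mathcal{A}$ with artificial noise $P$: in every round, each agent replaces every received message $i$ by a random $\sigma\in\Sigma$ with $\Pr(\sigma=j)=P_{ij}$, independently, and then applies $\mathcal{A}$ to the modified messages. The function $f:[0,1/d)\to\mathbb{R}$ is defined by $f(0)=0$ and, for $\delta\in(0,1/d)$, $$f(\delta)=\left(d+\frac{1}{2}\cdot\frac{1}{(d-1)^2}\cdot\frac{1-d\delta}{\delta}\right)^{-1}.$$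 *)

(* Defs.v *)
(* Alphabet Sigma = 'I_d, noise matrices = 'M[R]_d. *)
From HB Require Import structures.
From mathcomp Require Import all_boot all_order all_algebra.
Set Implicit Arguments. Unset Strict Implicit. Unset Printing Implicit Defensive.
Import Order.TTheory GRing.Theory Num.Theory.
Local Open Scope ring_scope.

Definition stochastic (R : realFieldType) (d : nat) (M : 'M[R]_d) : Prop :=
  (forall i j, 0 <= M i j) /\ (forall i, \sum_(j < d) M i j = 1).

Definition upper_bounded (R : realFieldType) (d : nat) (delta : R) (N : 'M[R]_d) : Prop :=
  stochastic N /\
  (forall s, 1 - (d%:R - 1) * delta <= N s s) /\
  (forall s s', s != s' -> N s s' <= delta).

Definition uniform_mx (R : realFieldType) (d : nat) (delta : R) : 'M[R]_d :=
  \matrix_(s, s') (if s == s' then 1 - (d%:R - 1) * delta else delta).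

Definition fdelta (R : realFieldType) (d : nat) (delta : R) : R :=
  if delta == 0 then 0
  else (d%:R + 2^-1 * (1 / (d%:R - 1) ^+ 2) * ((1 - d%:R * delta) / delta))^-1.

(* Probability that the displayed messages s (n independent observations) are
   received as r, when each is passed through noise N and then through the
   artificial noise P independently. *)
Definition two_stage_prob (R : realFieldType) (d n : nat) (N P : 'M[R]_d)
  (s r : n.-tuple 'I_d) : R :=
  \prod_(t < n) \sum_(k < d) N (tnth s t) k * P k (tnth r t).

Definition one_stage_prob (R : realFieldType) (d n : nat) (M : 'M[R]_d)
  (s r : n.-tuple 'I_d) : R :=
  \prod_(t < n) M (tnth s t) (tnth r t).

(* Main.v *)
Require Import Defs.
From HB Require Import structures.
From mathcomp Require Import all_boot all_order all_algebra.
From mathcomp Require Import ring lra.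
Import Order.TTheory GRing.Theory Num.Theory.
Local Open Scope ring_scope.

Lemma mono (R : realFieldType) d m (G : 'M[R]_d) (X : 'M[R]_(d,m)) :
  (forall i j, i != j -> G i j <= 0) -> (forall i, 0 < \sum_j G i j) ->
  (forall i c, 0 <= (G *m X) i c) -> forall i c, 0 <= X i c.
Proof.
move=> Hoff Hrow HX i c.
case: (@arg_minP _ R _ i xpredT (fun k => X k c) isT) => k _ Hk.
apply: le_trans (Hk i isT).
have H : (G *m X) k c <= (\sum_j G k j) * X k c.
  rewrite mxE mulr_suml; apply: ler_sum => j _.
  case: (eqVneq j k) => [->|njk]; first by [].
  rewrite -subr_ge0 -mulrBr; apply: mulr_le0.
    by apply: Hoff; rewrite eq_sym.
  by rewrite subr_le0; apply: Hk.
by have := le_trans (HX k c) H; rewrite pmulr_rge0.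
Qed.

Lemma unitG (R : realFieldType) d (G : 'M[R]_d) :
  (forall i j, i != j -> G i j <= 0) -> (forall i, 0 < \sum_j G i j) ->
  G \in unitmx.
Proof.
move=> Hoff Hrow.
rewrite unitmxE unitfE; apply/negP; rewrite -det_tr => /det0P [v vn0 hv].
have hX : G *m v^T = 0 by rewrite -[G]trmxK -trmx_mul hv trmx0.
have h1 : forall i c, 0 <= v^T i c.
  by move=> i c; apply: (@mono _ _ _ G (v^T) Hoff Hrow) => i' c'; rewrite hX mxE.
have h2 : forall i c, 0 <= (- v^T) i c.
  by move=> i c; apply: (@mono _ _ _ G (-v^T) Hoff Hrow) => i' c'; rewrite mulmxN hX oppr0 mxE.
move/eqP: vn0; apply; apply/matrixP => i j.
have := h1 j i; have := h2 j i; rewrite !mxE.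
move=> a b; apply/le_anti; rewrite b andbT; by rewrite -oppr_ge0.
Qed.
Lemma fd_facts (R : realFieldType) (d : nat) (delta : R) :
  (2 <= d)%N -> 0 <= delta -> delta < 1 / d%:R ->
  0 <= fdelta d delta /\ 0 <= 1 - d%:R * fdelta d delta /\
  d%:R * delta * (1 - d%:R * fdelta d delta) <= fdelta d delta * (1 - d%:R * delta).
Proof.
move=> hd hdel hlt.
have hD : (2:R) <= d%:R by rewrite (ler_nat R 2 d).
have hb : 0 < 1 - d%:R * delta.
  rewrite subr_gt0 -ltr_pdivlMl; last by lra.
  by rewrite mulr1 -[X in _ < X]mul1r.
rewrite /fdelta; case: eqP => [->|/eqP hne].
  rewrite !(mulr0, mul0r, subr0); lra.
have hp : 0 < delta by rewrite lt_def hne hdel.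
set e := d%:R - 1.
have he : 1 <= e by rewrite /e; lra.
have he0 : e != 0 by apply/eqP; lra.
have hd0 : delta != 0 by [].
set b := 1 - d%:R * delta.
have hD2 : 0 < 2 * e^+2 * delta * d%:R + b.
  apply: ltr_wpDl => //; apply: mulr_ge0; last lra.
  apply: mulr_ge0; last lra. apply: mulr_ge0; [lra| exact: sqr_ge0].
have hDn : 2 * e^+2 * delta * d%:R + b != 0 by apply/eqP; lra.
have -> : (d%:R + 2^-1 * (1 / e ^+ 2) * (b / delta))^-1
   = 2 * e^+2 * delta / (2 * e^+2 * delta * d%:R + b).
  have h2 : (2:R) != 0 by apply/eqP; lra.
  by field; rewrite hDn hd0 he0.
set D := 2 * e ^+ 2 * delta * d%:R + b.
set x := 2 * e ^+ 2 * delta.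
have hx : 1 - d%:R * (x / D) = b / D by rewrite /D /x; field.
have hx0 : 0 <= x by rewrite /x; have := sqr_ge0 e; nra.
have hDi : 0 < D^-1 by rewrite invr_gt0.
rewrite hx; split; first by apply: divr_ge0 => //; exact: ltW.
split; first by apply: divr_ge0; apply: ltW.
have -> : d%:R * delta * (b / D) = (d%:R * delta * b) * D^-1 by rewrite mulrA.
have -> : x / D * b = (x * b) * D^-1 by rewrite mulrAC.
apply: ler_wpM2r; first exact: ltW.
have hdx : d%:R <= 2 * e^+2 by rewrite /e; nra.
have hdb : 0 <= delta * b by apply: mulr_ge0 => //; apply: ltW.
rewrite /x; nra.
Qed.

Theorem theorem8 (R : realFieldType) (d : nat) (delta : R) (N : 'M[R]_d) :
  (2 <= d)%N -> 0 <= delta -> delta < 1 / d%:R -> upper_bounded delta N ->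
  exists P : 'M[R]_d,
    stochastic P /\
    (forall i j : 'I_d,
        \sum_(k < d) N i k * P k j = uniform_mx d (fdelta d delta) i j) /\
    (forall (n : nat) (s r : n.-tuple 'I_d),
        two_stage_prob N P s r = one_stage_prob (uniform_mx d (fdelta d delta)) s r).
Proof.
move=> hd hdel hlt [[Nge Nrow] [Ndiag Noff]].
have [hf0 [hf1 hf2]] := @fd_facts R d delta hd hdel hlt.
move: (fdelta d delta) hf0 hf1 hf2 => e hf0 hf1 hf2.
have hD : (2:R) <= d%:R by rewrite (ler_nat R 2 d).
have hb : 0 < 1 - d%:R * delta.
  rewrite subr_gt0 -ltr_pdivlMl; last by lra.
  by rewrite mulr1 -[X in _ < X]mul1r.
pose G := \matrix_(i, j) (N i j - delta).
have Goff : forall i j, i != j -> G i j <= 0.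
  by move=> i j ij; rewrite mxE subr_le0; exact: Noff.
have Grow : forall i, \sum_j G i j = 1 - d%:R * delta.
  move=> i; under eq_bigr do rewrite mxE.
  by rewrite sumrB Nrow sumr_const card_ord mulr_natl.
have Growp : forall i, 0 < \sum_j G i j by move=> i; rewrite Grow.
have GU := @unitG R d G Goff Growp.
pose Gi := invmx G.
have Gi0 : forall i j, 0 <= Gi i j.
  apply: (@mono _ _ _ G Gi Goff Growp) => i j.
  by rewrite mulmxV // mxE; exact: ler0n.
pose rr := (1 - d%:R * delta)^-1.
have hbn : 1 - d%:R * delta != 0 by apply/eqP; lra.
have hr : (1 - d%:R * delta) * rr = 1 by rewrite /rr mulfV.
have hr0 : 0 <= rr by rewrite /rr invr_ge0; apply: ltW.
have GiS : forall k, \sum_j Gi k j = rr.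
  move=> k.
  have h : (1 - d%:R * delta) * \sum_j Gi k j = 1.
    have S1 : \sum_l (1%:M : 'M[R]_d) k l = 1.
      rewrite (bigD1 k) //= mxE eqxx big1 ?addr0 // => l.
      by rewrite mxE eq_sym => /negbTE ->.
    transitivity (\sum_l (invmx G *m G) k l); last by rewrite (mulVmx GU) S1.
    under [RHS]eq_bigr do rewrite mxE.
    rewrite exchange_big /= mulr_sumr; apply: eq_bigr => j _.
    by rewrite -mulr_sumr Grow mulrC.
  by apply: (mulfI hbn); rewrite h hr.
have [c cdef] : exists c : 'I_d -> R, forall j, c j = \sum_i Gi i j.
  by exists (fun j => \sum_i Gi i j).
have Gile : forall i j, Gi i j <= rr.
  move=> i j; rewrite -(GiS i) (bigD1 j) //= lerDl.
  by apply: sumr_ge0 => l _; exact: Gi0.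
have cle : forall j, c j <= d%:R * rr.
  move=> j; rewrite cdef; apply: le_trans (ler_sum _ (fun i _ => Gile i j)) _.
  by rewrite sumr_const card_ord mulr_natl.
have csum : \sum_j c j = d%:R * rr.
  under eq_bigr do rewrite cdef.
  rewrite exchange_big /=; under eq_bigr do rewrite GiS.
  by rewrite sumr_const card_ord mulr_natl.
have NGi : forall i j, \sum_k N i k * Gi k j = (i == j)%:R + delta * c j.
  move=> i j; have := congr1 (fun M : 'M[R]_d => M i j) (mulmxV GU).
  rewrite /= !mxE => <-.
  rewrite cdef mulr_sumr -big_split; apply: eq_bigr => k _; rewrite mxE /= /Gi; ring.
pose P := \matrix_(k, j) ((1 - d%:R * e) * (Gi k j - delta * c j) + e).
have NP : forall i j, \sum_k N i k * P k j = uniform_mx d e i j.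
  move=> i j; rewrite [RHS]mxE.
  transitivity ((1 - d%:R * e) * (\sum_k N i k * Gi k j)
     - (1 - d%:R * e) * delta * c j * (\sum_k N i k) + e * \sum_k N i k).
    rewrite !mulr_sumr -sumrB -big_split; apply: eq_bigr => k _; rewrite mxE /=; ring.
  by rewrite NGi Nrow; case: (i == j); rewrite /= ?mulr1n ?mulr0n; ring.
exists P; split; last split.
- split.
    move=> k j; rewrite mxE.
    have h1 : d%:R * delta * (1 - d%:R * e) * rr <= e * (1 - d%:R * delta) * rr.
      exact: ler_wpM2r.
    rewrite -[e * _ * rr]mulrA hr mulr1 in h1.
    have := Gi0 k j; have := cle j.
    have : 0 <= (1 - d%:R * e) * delta by apply: mulr_ge0.
    nra.
  move=> k; under eq_bigr do rewrite mxE.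
  rewrite big_split /= -mulr_sumr sumrB -mulr_sumr GiS csum sumr_const card_ord.

  transitivity ((1 - d%:R * e) * ((1 - d%:R * delta) * rr) + e *+ d); first by ring.
  by rewrite hr; ring.
- exact: NP.
- move=> n s r; rewrite /two_stage_prob /one_stage_prob.
  by apply: eq_bigr => t _; exact: NP.
Qed.
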